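(* Let $V$ be a real vector space of odd finite dimension, $G\le\mathrm{GL}(V)$ a finite group such that $V$ is a non-trivial irreducible $\mathbb{R}G$-module and $-\mathrm{id}_V\notin G$, and let $n\in N_{\mathrm{GL}(V)}(G)$ have finite order, with $\nu=\mathrm{ad}_n\in\mathrm{Aut}(G)$ the automorphism $y\mapsto nyn^{-1}$. Suppose there is $g\in G$ such that $\mathrm{ad}_g\circ\nu$ has order $2$ in $\mathrm{Aut}(G)$. Then there is $h\in G$ such that $hn$ has eigenvalue $1$, i.e. $(G,V,n)$ has the $E1$-property.
   Context: For $x\in N_{\mathrm{GL}(V)}(G)$, $\mathrm{ad}_x\in\mathrm{Aut}(G)$ denotes conjugation $y\mapsto xyx^{-1}$. *)

(* Defs.v *)
From HB Require Import structures.
From mathcomp Require Import all_boot all_order all_algebra.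
From mathcomp Require Import reals.
Set Implicit Arguments. Unset Strict Implicit. Unset Printing Implicit Defensive.
Import GRing.Theory Num.Theory.
Local Open Scope ring_scope.

(* GL(V) for V = R^d (d = m.+1) is represented by the invertible d x d
   real matrices with matrix product; ^-1 is the matrix inverse. *)

Definition ad (R : comUnitRingType) (m : nat) (x y : 'M[R]_m.+1) : 'M[R]_m.+1 :=
  x * y * x^-1.

Definition is_finite_matrix_group (R : comUnitRingType) (m : nat)
  (G : seq 'M[R]_m.+1) : Prop :=
  [/\ 1 \in G,
      (forall g, g \in G -> g \in unitmx),
      (forall g h, g \in G -> h \in G -> g * h \in G) &
      (forall g, g \in G -> g^-1 \in G)].

(* V is an irreducible RG-module: the only G-invariant subspaces are 0 and V
   (subspaces = row spaces of square matrices, G acting on row vectors). *)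
Definition irreducible_module (R : fieldType) (m : nat) (G : seq 'M[R]_m.+1) : Prop :=
  forall U : 'M[R]_m.+1, (forall g, g \in G -> stablemx U g) ->
    \rank U = 0%N \/ row_full U.

Definition nontrivial_module (R : ringType) (m : nat) (G : seq 'M[R]_m.+1) : Prop :=
  exists2 g, g \in G & g != 1.

Definition in_normalizer (R : comUnitRingType) (m : nat) (G : seq 'M[R]_m.+1)
  (x : 'M[R]_m.+1) : Prop :=
  x \in unitmx /\ (forall y, y \in G -> (ad x y \in G) /\ (ad x^-1 y \in G)).

Definition order2_on (R : ringType) (m : nat) (G : seq 'M[R]_m.+1)
  (phi : 'M[R]_m.+1 -> 'M[R]_m.+1) : Prop :=
  (exists2 y, y \in G & phi y != y) /\ (forall y, y \in G -> phi (phi y) = y).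

(* Main.v *)
Require Import Defs.
From HB Require Import structures.
From mathcomp Require Import all_boot all_order all_algebra.
From mathcomp Require Import reals polyrcf.
Import GRing.Theory Num.Theory.
Local Open Scope ring_scope.

Theorem corollary4 (R : realType) (m : nat) (G : seq 'M[R]_m.+1) (n : 'M[R]_m.+1) :
  odd m.+1 ->
  is_finite_matrix_group G ->
  irreducible_module G ->
  nontrivial_module G ->
  (- 1) \notin G ->
  in_normalizer G n ->
  (exists2 k : nat, (0 < k)%N & n ^+ k = 1) ->
  (exists2 g, g \in G & order2_on G (fun y => ad g (ad n y))) ->
  exists2 h, h \in G & eigenvalue (h * n) 1.
Proof.
move=> oddm [G1 Gu GM GV] Hirr _ _ [nu Hn] [k k0 nk] [g gG [[y yG neq] inv]].
have gu : g \is a GRing.unit by exact: Gu.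
have nu' : n \is a GRing.unit by exact: nu.
set x := g * n.
have xu : x \is a GRing.unit by rewrite /x unitrMl.
have Hphi : forall z, ad g (ad n z) = x * z * x^-1.
  by move=> z; rewrite /ad /x invrM // !mulrA.
have xE : x = g * n by [].
clearbody x.
have comm : forall z, z \in G -> x ^+ 2 * z = z * x ^+ 2.
  move=> z zG; have H := inv z zG; rewrite !Hphi in H.
  rewrite -{2}H expr2 -!mulrA mulKr // mulVr // mulr1 !mulrA //.
have [mu hmu] : {mu : R | root (char_poly (x ^+ 2)) mu}.
  by apply: odd_poly_root; rewrite size_char_poly /= negbK.
have ev : eigenvalue (x ^+ 2) mu by rewrite eigenvalue_root_char.
have hA : x ^+ 2 = mu%:M.
  set U := kermx (x ^+ 2 - mu%:M).
  have st : forall h, h \in G -> stablemx U h.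
    move=> h hG; rewrite sub_kermx -mulmxA.
    have -> : h *m (x ^+ 2 - mu%:M) = (x ^+ 2 - mu%:M) *m h.
      by rewrite mulmxBr mulmxBl scalar_mxC; congr (_ - _); exact: (esym (comm h hG)).
    by rewrite mulmxA mulmx_ker mul0mx.
  case: (Hirr U st) => [/eqP|].
    by rewrite mxrank_eq0 => /eqP U0; move: ev; rewrite /eigenvalue /eigenspace -/U U0 eqxx.
  rewrite -sub1mx sub_kermx mul1mx subr_eq0 => /eqP //.
have mu0 : mu != 0.
  apply/eqP => mu0; have : x ^+ 2 \is a GRing.unit by rewrite unitrX.
  by rewrite hA mu0 raddf0 unitr0.
have P : forall j, exists2 gj, gj \in G & x ^+ j = gj * n ^+ j.
  elim=> [|j [gj gjG E]]; first by exists 1; rewrite ?expr0 ?mulr1.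
  exists (g * ad n gj); first by apply: GM => //; case: (Hn gj gjG).
  rewrite exprS E xE /ad exprS -!mulrA; congr (_ * _); rewrite !mulrA mulrVK //.
set c := mu ^+ k.
have cG : c%:M \in G.
  have [gj gjG E] := P (2 * k)%N.
  have : x ^+ (2 * k) = c%:M.
    rewrite exprM hA /c; elim: (k) => [|j IH]; first by rewrite !expr0.
    by rewrite !exprS IH scalar_mxM.
  by rewrite E mulnC exprM nk expr1n mulr1 => <-.
have cpow : forall i, (c ^+ i)%:M \in G.
  elim=> [|i IH]; first by rewrite expr0.
  by rewrite exprS scalar_mxM; apply: GM.
have c1 : `|c| = 1.
  apply/eqP; apply/negPn/negP => cn1.
  have cpos : 0 < `|c| by rewrite normr_gt0 /c expf_neq0.
  have inj : {in iota 0 (size G).+1 &, injective (fun i => (c ^+ i)%:M : 'M[R]_m.+1)}.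
    move=> i j _ _ /= E.
    have := congr1 (fun M : 'M[R]_m.+1 => M 0 0) E.
    rewrite !mxE eqxx /= => /(congr1 Num.norm); rewrite (normrX i c) (normrX j c).
    exact: (ieexprIn cpos cn1).
  have sub : {subset [seq (c ^+ i)%:M : 'M[R]_m.+1 | i <- iota 0 (size G).+1] <= G}.
    by move=> z /mapP [i _ ->]; exact: cpow.
  have := uniq_leq_size _ sub.
  by rewrite map_inj_in_uniq // iota_uniq size_map size_iota ltnn => /(_ isT).
have mu1 : `|mu| = 1.
  by apply/eqP; rewrite -(pexpr_eq1 k0) ?normr_ge0 // -normrX c1.
have x2 : x ^+ 2 = 1.
  rewrite hA; move/eqP: mu1; rewrite eqr_norml ler01 andbT => /orP [/eqP -> //|/eqP mum].
  have : \det x ^+ 2 = - 1.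
    rewrite expr2 -detM -expr2 hA mum det_scalar -signr_odd oddm expr1 //.
  move=> H; have := sqr_ge0 (\det x); rewrite H.
  by rewrite ler0N1.
have xn1 : x != - 1.
  apply/eqP => xm; move: neq; rewrite Hphi xm invrN1 mulrN1 mulNr mul1r opprK.
  by rewrite eqxx.
exists g => //.
rewrite /eigenvalue /eigenspace -xE.
apply/eqP => K.
have : ((x + 1)%R <= kermx (x - 1%:M))%MS.
  rewrite sub_kermx; apply/eqP.
  rewrite -[_ *m _]/((x + 1) * (x - 1)) mulrDl mul1r mulrBr mulr1 -expr2 x2.
  by rewrite addrA subrK subrr.
rewrite K submx0 addr_eq0 => /eqP E.
by move: xn1; rewrite E eqxx.
Qed.
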